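(* Every separable, incomplete real normed space $X$ contains a bounded overcomplete sequence that is not relatively (norm) compact in $X$.
   Context: A sequence $(g_k)_{k<\omega}$ in a normed space $X$ is overcomplete if every subsequence of it is linearly dense in $X$, i.e. the closed linear span of every subsequence is $X$. *)

(* Defs.v *)
From HB Require Import structures.
From mathcomp Require Import all_boot all_order all_algebra.
From mathcomp Require Import all_classical all_reals all_analysis.
From mathcomp Require Import Rstruct Rstruct_topology.
Set Implicit Arguments. Unset Strict Implicit. Unset Printing Implicit Defensive.
Import Order.TTheory GRing.Theory Num.Theory.
Import numFieldNormedType.Exports.
Local Open Scope classical_set_scope.
Local Open Scope ring_scope.

Definition separable_space {K : numDomainType} (X : normedModType K) : Prop :=
  exists D : set X, countable D /\ dense D.

Definition incomplete_space {K : numDomainType} (X : normedModType K) : Prop :=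
  exists u : nat -> X, cauchy (u @ \oo) /\ ~ cvg (u @ \oo).

Definition lin_span {K : numDomainType} {X : normedModType K} (S : set X) : set X :=
  [set x | exists (n : nat) (c : 'I_n -> K) (v : 'I_n -> X),
      (forall i, S (v i)) /\ x = \sum_(i < n) c i *: v i].

Definition linearly_dense {K : numDomainType} {X : normedModType K} (S : set X) : Prop :=
  closure (lin_span S) = [set: X].

Definition overcomplete {K : numDomainType} {X : normedModType K} (g : nat -> X) : Prop :=
  forall phi : nat -> nat, (forall n, (phi n < phi n.+1)%N) ->
    linearly_dense (range (g \o phi)).

Definition bounded_seq {K : numDomainType} {X : normedModType K} (g : nat -> X) : Prop :=
  exists M : K, forall n, `|g n| <= M.

Definition relatively_compact {T : topologicalType} (A : set T) : Prop :=
  compact (closure A).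

(* Main.v *)
Require Import Defs.
From HB Require Import structures.
From mathcomp Require Import all_boot all_order all_algebra.
From mathcomp Require Import all_classical all_reals all_analysis.
From mathcomp Require Import Rstruct Rstruct_topology.
From Stdlib Require Import Reals.
From mathcomp Require Import lra.
Delimit Scope nat_scope with N.
Set Implicit Arguments. Unset Strict Implicit. Unset Printing Implicit Defensive.
Import Order.TTheory GRing.Theory Num.Theory.
Import numFieldNormedType.Exports.
Local Open Scope classical_set_scope.
Local Open Scope ring_scope.

Section Helpers.
Variable X : normedModType R.

Lemma approxP (A : set X) x :
  closure A x <-> forall e : R, 0 < e -> exists a, A a /\ `|x - a| < e.
Proof.
split.
- move=> cl e e0; have [a [Aa Ba]] := cl _ (nbhsx_ballx x e e0).
  by exists a; split => //; move: Ba; rewrite -ball_normE.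
- move=> H B /nbhs_ballP [e /= e0 sub]; have [a [Aa lt]] := H e e0.
  by exists a; split => //; apply: sub; rewrite -ball_normE.
Qed.

Variable S : set X.

Lemma span_of x : S x -> lin_span S x.
Proof.
move=> Sx; exists 1%N, (fun _ => 1), (fun _ => x); split => //.
by rewrite big_ord1 scale1r.
Qed.

Lemma span0 : lin_span S 0.
Proof.
exists 0%N, (fun _ => 0), (fun _ => 0); split; first by case.
by rewrite big_ord0.
Qed.

Lemma span_scale c x : lin_span S x -> lin_span S (c *: x).
Proof.
move=> [n [a [v [Sv ->]]]]; exists n, (fun i => c * a i), v; split => //.
by rewrite scaler_sumr; apply: eq_bigr => i _; rewrite scalerA.
Qed.

Lemma span_add x y : lin_span S x -> lin_span S y -> lin_span S (x + y).
Proof.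
move=> [n [a [v [Sv ->]]]] [m [b [w [Sw ->]]]].
exists (n + m)%N, (fun i => match fintype.split i with inl j => a j | inr j => b j end),
  (fun i => match fintype.split i with inl j => v j | inr j => w j end); split.
  by move=> i; case: (fintype.split i).
rewrite big_split_ord /=; congr (_ + _); apply: eq_bigr => i _.
  by rewrite (unsplitK (inl _ i)).
by rewrite (unsplitK (inr _ i)).
Qed.

Let Y := closure (lin_span S).

Lemma Y_of x : S x -> Y x.
Proof. by move=> Sx; apply: subset_closure; apply: span_of. Qed.

Lemma Y0 : Y 0.
Proof. by apply: subset_closure; apply: span0. Qed.

Lemma Yadd x y : Y x -> Y y -> Y (x + y).
Proof.
move=> /approxP Hx /approxP Hy; apply/approxP => e e0.
have e20 : 0 < e / 2 by lra.
have [a [La ha]] := Hx _ e20; have [b [Lb hb]] := Hy _ e20.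
exists (a + b); split; first exact: span_add.
rewrite opprD addrACA; apply: (le_lt_trans (ler_normD _ _)); lra.
Qed.

Lemma Yscale c x : Y x -> Y (c *: x).
Proof.
move=> /approxP Hx; apply/approxP => e e0.
have c0 : 0 < `|c| + 1 by have := normr_ge0 c; lra.
have [a [La ha]] := Hx _ (divr_gt0 e0 c0).
exists (c *: a); split; first exact: span_scale.
rewrite -scalerBr normrZ.
move: ha; rewrite ltr_pdivlMr // => ha.
have := normr_ge0 c; have := normr_ge0 (x - a); nra.
Qed.

Lemma Ysub x y : Y x -> Y y -> Y (x - y).
Proof. by move=> Hx Hy; apply: Yadd => //; rewrite -scaleN1r; apply: Yscale. Qed.

Lemma Ysum (r : seq nat) (P : pred nat) (F : nat -> X) :
  (forall i, P i -> Y (F i)) -> Y (\sum_(i <- r | P i) F i).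
Proof. by move=> H; apply: big_ind => //; [exact: Y0 | exact: Yadd]. Qed.

End Helpers.

Lemma tail_bound (X : normedModType R) (s : R) (v : nat -> X) :
  0 <= s -> s <= 2^-1 -> (forall k, `|v k| <= 1) ->
  forall m n, `|\sum_(m <= k < n) s ^+ k *: v k| <= 2 * s ^+ m.
Proof.
move=> s0 s2 v1.
have H : forall d m, `|\sum_(m <= k < m + d) s ^+ k *: v k| <= 2 * s ^+ m.
  elim=> [|d IH] m.
    by rewrite addn0 big_geq // normr0 mulr_ge0 // exprn_ge0.
  rewrite big_ltn; last by rewrite addnS ltnS leq_addr.
  rewrite addnS -addSn; apply: (le_trans (ler_normD _ _)).
  have := IH m.+1; rewrite normrZ exprS ger0_norm ?exprn_ge0 //.
  have := v1 m; have := normr_ge0 (v m); have := exprn_ge0 m s0; nra.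
move=> m n; case: (leqP m n) => mn.
  by rewrite -(subnKC mn); apply: H.
by rewrite big_geq ?normr0 ?mulr_ge0 ?exprn_ge0 // ltnW.
Qed.

Lemma grp (V : zmodType) (A B C D E F : V) :
  A + (B + (C + D)) - (E + F) - B = C + ((A - E) + D - F).
Proof.
rewrite addrCA addrAC [B + _]addrC addrK opprD !addrA.
rewrite (addrC A C) -!addrA; congr (_ + _); congr (_ + _).
by rewrite addrCA.
Qed.

Lemma incr_ge (phi : nat -> nat) : (forall n, (phi n < phi n.+1)%N) ->
  forall m, (m <= phi m)%N.
Proof. by move=> H; elim=> // m IH; apply: (leq_ltn_trans IH). Qed.

Lemma incr_mono (phi : nat -> nat) : (forall n, (phi n < phi n.+1)%N) ->
  forall m m', (m <= m')%N -> (phi m <= phi m')%N.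
Proof.
move=> H m m' /subnKC <-; elim: (m' - m)%N => [|d IH]; first by rewrite addn0.
by rewrite addnS; apply: (leq_trans IH); apply: ltnW.
Qed.

Lemma main_lemma (X : normedModType R) (e a : nat -> X) (s : nat -> R)
    (phi : nat -> nat) :
  (forall n, 0 < s n) -> (forall n, s n <= 2^-1) ->
  (forall eps, 0 < eps -> exists N, forall n, (N <= n)%N -> s n < eps) ->
  (forall k, `|e k| <= 1) ->
  (forall p q, (p <= q)%N -> `|a p - a q| <= s p ^+ p) ->
  (forall n, (phi n < phi n.+1)%N) ->
  forall K, (0 < K)%N ->
  closure (lin_span (range ((fun n => a n + \sum_(1 <= k < n.+1) s n ^+ k *: e k) \o phi))) (e K).
Proof.
move=> sp s2 ssmall e1 Ha Hphi.
pose g := fun n => a n + \sum_(1 <= k < n.+1) s n ^+ k *: e k.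
change (forall K, (0 < K)%N -> closure (lin_span (range (g \o phi))) (e K)).
set Y := closure _.
have gY : forall m, Y (g (phi m)) by move=> m; apply: Y_of; exists m.
have step : forall L, (0 < L)%N -> (forall j, (0 < j < L)%N -> Y (e j)) -> Y (e L).
  move=> L L0 IHL.
  have cY : Y = closure Y by apply/closure_id; exact: closed_closure.
  rewrite cY; apply/approxP => eps eps0.
  have [N1 HN1] := ssmall (eps / 6) (ltac:(lra)).
  pose m := maxn N1 L.+1; pose p := phi m.
  have mp : (m <= p)%N by apply: (incr_ge Hphi).
  have Lp : (L < p)%N by apply: leq_trans mp; exact: leq_maxr.
  have sp6 : s p < eps / 6 by apply: HN1; apply: leq_trans mp; exact: leq_maxl.
  pose t := s p ^+ L.
  have t0 : 0 < t by apply: exprn_gt0.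
  have [N2 HN2] := ssmall (eps * t / 4) (ltac:(have := mulr_gt0 eps0 t0; lra)).
  pose m' := maxn N2 m; pose q := phi m'.
  have pq : (p <= q)%N by apply: (incr_mono Hphi); exact: leq_maxr.
  have sq : s q < eps * t / 4.
    by apply: HN2; apply: leq_trans (incr_ge Hphi m'); exact: leq_maxl.
  pose Sig := \sum_(1 <= j < L) s p ^+ j *: e j.
  pose W := \sum_(L.+1 <= k < p.+1) s p ^+ k *: e k.
  pose cq := \sum_(1 <= k < q.+1) s q ^+ k *: e k.
  exists (t^-1 *: (g p - g q - Sig)); split.
    apply: Yscale; apply: Ysub; first by apply: Ysub; apply: gY.
    rewrite /Sig big_nat_cond; apply: Ysum => j /andP[/andP[j1 jL] _].
    by apply: Yscale; apply: IHL; rewrite j1 jL.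
  have gp : g p = a p + (Sig + (t *: e L + W)).
    rewrite /g /= (@big_cat_nat _ _ _ L) //=; last by apply: ltnW; apply: ltnW.
    by rewrite (@big_ltn _ _ _ L) //; apply: ltnW.
  have gq : g q = a q + cq by [].
  have E : e L - t^-1 *: (g p - g q - Sig) = - (t^-1 *: ((a p - a q) + W - cq)).
    rewrite gp gq grp scalerDr scalerA mulVf ?gt_eqF // scale1r.
    by rewrite opprD addrA subrr add0r.
  rewrite E normrN normrZ ger0_norm; last by rewrite invr_ge0 ltW.
  rewrite mulrC ltr_pdivrMr //.
  have h1 := Ha p q pq.
  have h1' : s p ^+ p <= s p ^+ L.+1.
    by apply: ler_wiXn2l; [apply: ltW | have := s2 p; lra | ].
  have h2 : `|W| <= 2 * s p ^+ L.+1.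
    by apply: tail_bound => //; apply: ltW.
  have h3 : `|cq| <= 2 * s q ^+ 1.
    by apply: tail_bound => //; apply: ltW.
  rewrite expr1 in h3; rewrite exprSr -/t in h1' h2.
  have h4 : t * s p < t * (eps / 6) by rewrite ltr_pM2l.
  apply: (le_lt_trans (ler_normB _ _)).
  have := ler_normD (a p - a q) W.
  lra.
suff H : forall K j, (0 < j <= K)%N -> Y (e j).
  by move=> K K0; apply: (H K); rewrite K0 leqnn.
elim=> [|K IH] j; first by case: j.
move=> /andP[j0 jK]; have [jK'|jK'] := leqP j K.
  by apply: IH; rewrite j0 jK'.
have -> : j = K.+1 by apply/eqP; rewrite eqn_leq jK jK'.
apply: step => // i /andP[i0 iK]; apply: IH; rewrite i0; exact: iK.
Qed.

Theorem theorem5p2 (X : normedModType R) :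
  separable_space X -> incomplete_space X ->
  exists g : nat -> X,
    bounded_seq g /\ overcomplete g /\ ~ relatively_compact (range g).
Proof.
move=> [D [cD dD]] [u [cu ncu]].
have [x0 Dx0] : exists x0, D x0.
  have [y [_ Dy]] := dD (ball (0:X) 1) (ex_intro _ 0 (ballxx 0 ltr01)) (ball_open _ _).
  by exists y.
have /countable_injP [f finj] := cD.
pose d n := xget x0 [set x | D x /\ f x = n].
have dsurj : forall x, D x -> d (f x) = x.
  move=> x Dx.
  have [Dy fy] : D (d (f x)) /\ f (d (f x)) = f x.
    exact: (@xgetPex _ x0 [set y | D y /\ f y = f x] (ex_intro _ x (conj Dx erefl))).
  exact: (finj _ _ (mem_set Dy) (mem_set Dx) fy).
have dense_d : forall x (eps : R), 0 < eps -> exists k, `|x - d k| < eps.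
  move=> x eps eps0.
  have [y [Bxy Dy]] := dD (ball x eps) (ex_intro _ x (ballxx x eps0)) (ball_open _ _).
  by exists (f y); rewrite dsurj //; move: Bxy; rewrite -ball_normE.
have cauchyN : forall eps : R, 0 < eps -> exists N, forall i j,
    (N <= i)%N -> (N <= j)%N -> `|u i - u j| < eps.
  move=> eps eps0; have /cauchyP cex := cu.
  have [x [N _ HN]] := cex (eps / 2) (ltac:(lra)).
  exists N => i j Ni Nj.
  have := HN i Ni; have := HN j Nj; rewrite -!ball_normE /= => hj hi.
  apply: (le_lt_trans (ler_distD x _ _)); rewrite distrC; lra.
pose s n : R := (n.+2%:R)^-1.
have sp : forall n, 0 < s n by move=> n; rewrite /s invr_gt0 ltr0n.
have s2 : forall n, s n <= 2^-1.
  by move=> n; rewrite /s lef_pV2 ?posrE ?ltr0n // ler_nat.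
have ssmall : forall eps, 0 < eps -> exists N, forall n, (N <= n)%N -> s n < eps.
  move=> eps eps0; exists (Num.Def.truncn eps^-1) => n Nn.
  rewrite /s -[eps]invrK ltf_pV2 ?posrE ?invr_gt0 ?ltr0n //.
  apply: (lt_le_trans (truncnS_gt _)); rewrite ler_nat ltnS; exact: leqW.
have /choice [N HN] : forall n, exists N, forall i j,
    (N <= i)%N -> (N <= j)%N -> `|u i - u j| < s n ^+ n.
  by move=> n; apply: cauchyN; apply: exprn_gt0.
pose psi n := (n + \max_(i < n.+1) N i)%N.
pose a n := u (psi n).
have Ha : forall p q, (p <= q)%N -> `|a p - a q| <= s p ^+ p.
  move=> p q pq; apply: ltW; apply: HN.
    apply: leq_trans (leq_addl _ _).
    exact: (leq_bigmax (F := fun i : 'I_p.+1 => N i) ord_max).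
  apply: leq_trans (leq_addl _ _).
  have pq' : (p < q.+1)%N by [].
  exact: (leq_bigmax (F := fun i : 'I_q.+1 => N i) (Ordinal pq')).
pose e k := (1 + `|d k.-1|)^-1 *: d k.-1.
have e1 : forall k, `|e k| <= 1.
  move=> k; have h0 := normr_ge0 (d k.-1).
  have h1 : 0 < 1 + `|d k.-1| by lra.
  rewrite /e normrZ ger0_norm; last by rewrite invr_ge0; lra.
  rewrite mulrC ler_pdivrMr //; lra.
pose g n := a n + \sum_(1 <= k < n.+1) s n ^+ k *: e k.
exists g; split; [|split].
- exists (`|a 0%N| + 2) => n.
  have h1 := Ha 0%N n (leq0n n); rewrite expr0 in h1.
  have h2 : `|\sum_(1 <= k < n.+1) s n ^+ k *: e k| <= 2 * s n ^+ 1.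
    by apply: tail_bound => //; apply: ltW.
  rewrite expr1 in h2.
  have h3 := ler_normD (a n) (\sum_(1 <= k < n.+1) s n ^+ k *: e k).
  have h4 := ler_normD (a 0%N) (a n - a 0%N).
  rewrite addrC subrK distrC in h4.
  have := s2 n; rewrite /g; lra.
- move=> phi Hphi; rewrite /linearly_dense; apply/seteqP; split => // x _.
  apply/approxP => eps eps0.
  have [k hk] := dense_d x (eps / 2) (ltac:(lra)).
  have Yek := main_lemma sp s2 ssmall e1 Ha Hphi (ltn0Sn k).
  have Ydk : closure (lin_span (range (g \o phi))) (d k).
    have -> : d k = (1 + `|d k|) *: e k.+1.
      rewrite /e /= scalerA mulfV ?scale1r //.
    by apply: (@Yscale X (range (g \o phi)) (1 + `|d k|) (e k.+1)); exact: Yek.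
  move/approxP: Ydk => /(_ (eps / 2) (ltac:(lra))) [y [Ly hy]].
  exists y; split => //.
  apply: (le_lt_trans (ler_distD (d k) _ _)); lra.
- move=> cpt.
  have [x [_ clx]] := cpt (g @ \oo) _ (ltac:(exists 0%N => // n _ /=; apply: subset_closure; by exists n)).
  apply: ncu; apply: (cvgP x); apply/cvgrPdist_lt => eps eps0.
  have [N0 HN0] := cauchyN (eps / 3) (ltac:(lra)).
  have [N1 HN1] := ssmall (eps / 6) (ltac:(lra)).
  pose M := maxn N0 N1.
  have FA : (g @ \oo) [set g n | n in [set n | (M <= n)%N]].
    by exists M => // n Mn; exists n.
  have NB : nbhs x (ball x (eps / 3)) by apply: nbhsx_ballx; lra.
  have [y [[n Mn <-] Bn]] := clx _ _ FA NB.
  exists N0 => // m Nm.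
  move: Bn; rewrite -ball_normE => Bn.
  have nM : (N0 <= n)%N /\ (N1 <= n)%N.
    by split; apply: leq_trans _ Mn; [exact: leq_maxl | exact: leq_maxr].
  have snl := HN1 n nM.2.
  have hc : `|\sum_(1 <= k < n.+1) s n ^+ k *: e k| <= 2 * s n ^+ 1.
    by apply: tail_bound => //; apply: ltW.
  rewrite expr1 in hc.
  have hu : `|a n - u m| < eps / 3.
    apply: HN0 => //; apply: leq_trans nM.1 _; exact: leq_addr.
  apply: (le_lt_trans (ler_distD (g n) _ _)).
  have -> : g n - u m = (a n - u m) + \sum_(1 <= k < n.+1) s n ^+ k *: e k.
    by rewrite /g addrAC.
  have := ler_normD (a n - u m) (\sum_(1 <= k < n.+1) s n ^+ k *: e k).
  move: Bn; rewrite /ball_ => Bn.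
  have Bn2 : `|x - g n| < eps / 3 := Bn. lra.
Qed.
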